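(* Let $R$ be a commutative ring and $I$ an invertible fractional ideal of $R$. If $M_1,\ldots,M_n$ are $R$-submodules of $T(R)$ with $I=\bigcup_{k=1}^n M_k$, then $I=M_k$ for some $k$.
   Context: All rings are commutative with $1\neq 0$. $T(R)$ denotes the total ring of fractions of $R$. A fractional ideal of $R$ is an $R$-submodule $I\subseteq T(R)$ such that $aI\subseteq R$ for some nonzerodivisor $a\in R$; for fractional ideals $I,J$, $IJ$ is the set of finite sums $\sum x_iy_i$ with $x_i\in I$, $y_i\in J$. A fractional ideal $I$ is invertible if $IJ=R$ for some fractional ideal $J$. *)

(* Defs.v *)
From mathcomp Require Import all_boot all_algebra.
Set Implicit Arguments. Unset Strict Implicit. Unset Printing Implicit Defensive.
Import GRing.Theory.
Local Open Scope ring_scope.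

Definition nonzerodivisor (R : comNzRingType) (s : R) : Prop :=
  forall r : R, r * s = 0 -> r = 0.

(* This characterizes T(R) = S^{-1}R (S = nonzerodivisors)
   up to unique R-isomorphism. *)
Definition total_ring_of_fractions (R : comNzRingType) (T : comUnitRingType)
    (f : {rmorphism R -> T}) : Prop :=
  [/\ injective f,
      (forall s : R, nonzerodivisor s -> f s \is a GRing.unit) &
      (forall t : T, exists a s : R, nonzerodivisor s /\ t = f a / f s)].

Definition Rsubmodule (R : comNzRingType) (T : comUnitRingType)
    (f : {rmorphism R -> T}) (M : T -> Prop) : Prop :=
  [/\ M 0,
      (forall x y, M x -> M y -> M (x + y)) &
      (forall (r : R) x, M x -> M (f r * x))].

Definition fractional_ideal (R : comNzRingType) (T : comUnitRingType)
    (f : {rmorphism R -> T}) (I : T -> Prop) : Prop :=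
  Rsubmodule f I /\
  exists a : R, nonzerodivisor a /\
    forall x, I x -> exists r : R, f a * x = f r.

Definition ideal_prod (T : comUnitRingType) (I J : T -> Prop) : T -> Prop :=
  fun z => exists (n : nat) (xs ys : 'I_n -> T),
    [/\ forall i, I (xs i), forall i, J (ys i) & z = \sum_(i < n) xs i * ys i].

Definition invertible_fractional_ideal (R : comNzRingType) (T : comUnitRingType)
    (f : {rmorphism R -> T}) (I : T -> Prop) : Prop :=
  fractional_ideal f I /\
  exists J : T -> Prop, fractional_ideal f J /\
    forall z, ideal_prod I J z <-> exists r : R, z = f r.

(* Main.v *)
Require Import Defs.
From mathcomp Require Import all_boot all_algebra.
From mathcomp Require Import ring.
From Stdlib Require Import Classical.
Set Implicit Arguments. Unset Strict Implicit. Unset Printing Implicit Defensive.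
Import GRing.Theory.
Local Open Scope ring_scope.

Definition idl (R : comNzRingType) (A : R -> Prop) : Prop :=
  [/\ A 0, (forall a b, A a -> A b -> A (a + b)) & (forall r a, A a -> A (r * a))].

Definition Sat (R : comNzRingType) (T : comUnitRingType) (f : {rmorphism R -> T})
  (J : T -> Prop) (A : R -> Prop) (x : T) : Prop :=
  forall y, J y -> exists r, A r /\ x * y = f r.

Definition sumI (R : comNzRingType) (A B : R -> Prop) : R -> Prop :=
  fun z => exists a b, [/\ A a, B b & z = a + b].

Lemma idl_sum (R : comNzRingType) (A B : R -> Prop) : idl A -> idl B -> idl (sumI A B).
Proof.
case=> A0 AD AM [B0 BD BM]; split.
- by exists 0, 0; split; rewrite ?addr0.
- move=> _ _ [a [b [Aa Bb ->]]] [a' [b' [Aa' Bb' ->]]].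
  exists (a + a'), (b + b'); split; [exact: AD|exact: BD|].
  by rewrite addrACA.
- move=> r _ [a [b [Aa Bb ->]]]; exists (r * a), (r * b); split; [exact: AM|exact: BM|].
  by rewrite mulrDr.
Qed.

Lemma Sat_mono (R : comNzRingType) (T : comUnitRingType) f J (A B : R -> Prop) (x : T) :
  (forall r, A r -> B r) -> Sat f J A x -> Sat f J B x.
Proof. move=> AB hS y Jy; have [r [Ar e]] := hS y Jy; exists r; split => //; exact: AB. Qed.

Lemma Sat_add (R : comNzRingType) (T : comUnitRingType) f J (A : R -> Prop) (x x' : T) :
  idl A -> Sat f J A x -> Sat f J A x' -> Sat f J A (x + x').
Proof.
case=> _ AD _ h h' y Jy; have [r [Ar e]] := h y Jy; have [r' [Ar' e']] := h' y Jy.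
exists (r + r'); split; first exact: AD.
by rewrite mulrDl e e' rmorphD.
Qed.

Lemma Sat_scale (R : comNzRingType) (T : comUnitRingType) f J (A : R -> Prop) (x : T) r :
  idl A -> Sat f J A x -> Sat f J A (f r * x).
Proof.
case=> _ _ AM h y Jy; have [s [As e]] := h y Jy.
exists (r * s); split; first exact: AM.
by rewrite -mulrA e rmorphM.
Qed.

Lemma Sat_base (R : comNzRingType) (T : comUnitRingType) (f : {rmorphism R -> T})
  (I J : T -> Prop) (A : R -> Prop) w r :
  (forall x y, I x -> J y -> exists s, x * y = f s) ->
  idl A -> I w -> A r -> Sat f J A (f r * w).
Proof.
move=> hIJ [_ _ AM] Iw Ar y Jy; have [s e] := hIJ w y Iw Jy.
exists (r * s); split; first by rewrite mulrC; apply: AM.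
by rewrite -mulrA e rmorphM.
Qed.

Lemma exists_out (R : comNzRingType) (T : comUnitRingType) (f : {rmorphism R -> T})
  (I J : T -> Prop) (A : R -> Prop) :
  injective f ->
  (exists m (xs ys : 'I_m -> T), [/\ forall i, I (xs i), forall i, J (ys i) &
       1 = \sum_(i < m) xs i * ys i]) ->
  idl A -> ~ A 1 -> exists w, I w /\ ~ Sat f J A w.
Proof.
move=> finj [m [xs [ys [Ixs Jys e1]]]] hA nA1.
apply: NNPP => hno; apply: nA1.
have hS : forall i, exists r, A r /\ xs i * ys i = f r.
  move=> i; apply: NNPP => hn; apply: hno; exists (xs i); split => //.
  by move=> hs; apply: hn; exact: hs.
have [r hr] := fin_all_exists hS.
have -> : (1 : R) = \sum_(i < m) r i.
  apply: finj; rewrite rmorph1 e1 raddf_sum; apply: eq_bigr => i _; exact: (hr i).2.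
case: hA => A0 AD _; apply: big_ind => //; move=> i _; exact: (hr i).1.
Qed.

Lemma key (R : comNzRingType) (T : comUnitRingType) (f : {rmorphism R -> T})
  (I J : T -> Prop) :
  injective f -> Rsubmodule f I ->
  (forall x y, I x -> J y -> exists s, x * y = f s) ->
  (exists m (xs ys : 'I_m -> T), [/\ forall i, I (xs i), forall i, J (ys i) &
       1 = \sum_(i < m) xs i * ys i]) ->
  forall n (A : 'I_n -> R -> Prop), (forall k, idl (A k)) -> (forall k, ~ A k 1) ->
  exists x, I x /\ forall k, ~ Sat f J (A k) x.
Proof.
move=> finj [I0 ID IM] hIJ h1; elim=> [|n IH] A hA nA1.
  by exists 0; split => // -[].
set An := A ord_max.
pose wd := widen_ord (leqnSn n).
have split_ord : forall j : 'I_n.+1, j = ord_max \/ exists i : 'I_n, j = wd i.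
  move=> [j hj]; case: (ltnP j n) => hjn.
    by right; exists (Ordinal hjn); apply: val_inj.
  by left; apply: val_inj => /=; apply/eqP; rewrite eqn_leq hjn -ltnS hj.
have [[k hk]|hall] := classic (exists k : 'I_n, ~ sumI (A (wd k)) An 1).
  pose A' := fun i : 'I_n => if i == k then sumI (A (wd i)) An else A (wd i).
  have hA' : forall i, idl (A' i).
    by move=> i; rewrite /A'; case: ifP => _; [apply: idl_sum; apply: hA|apply: hA].
  have nA' : forall i, ~ A' i 1.
    by move=> i; rewrite /A'; case: ifP => [/eqP->|_] //; apply: nA1.
  have [x [Ix hx]] := IH A' hA' nA'.
  - exists x; split => // j; have [->|[i ->]] := split_ord j => hS.
    + apply: (hx k); rewrite /A' eqxx; apply: Sat_mono hS => r Ar.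
      have [A0 _ _] := hA (wd k).
      by exists 0, r; split; rewrite ?add0r.
    + apply: (hx i); rewrite /A'; case: ifP => [/eqP ek|_] //.
      apply: Sat_mono hS => r Ar; have [A0 _ _] := hA ord_max.
      by exists r, 0; split; rewrite ?addr0.
have hall' : forall k : 'I_n, sumI (A (wd k)) An 1.
  by move=> k; apply: NNPP => hn; apply: hall; exists k.
have [x [Ix hx]] := IH (fun i => A (wd i)) (fun i => hA _) (fun i => nA1 _).
have [w [Iw hw]] := exists_out finj h1 (hA ord_max) (nA1 ord_max).
have ha : forall k : 'I_n, exists a, A (wd k) a /\ An (1 - a).
  move=> k; have [a [b [Aa Bb e]]] := hall' k; exists a; split => //.
  by rewrite e addrAC subrr add0r.
have [a ha'] := fin_all_exists ha.
pose e := \prod_(k < n) a k.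
have eA : forall k, A (wd k) e.
  move=> k; rewrite /e (bigD1 k) //=; have [_ _ AM] := hA (wd k).
  rewrite mulrC; apply: AM; exact: (ha' k).1.
have eN : An (1 - e).
  have [A0 AD AM] := hA ord_max.
  rewrite /e; apply: (big_ind (fun p => An (1 - p))).
  - by rewrite subrr.
  - move=> p q hp hq.
    have -> : 1 - p * q = (1 - p) + p * (1 - q) by rewrite mulrBr mulr1 addrA subrK.
    exact: AD _ _ hp (AM _ _ hq).
  - move=> i _; exact: (ha' i).2.
case: (classic (Sat f J An x)) => hxn; last first.
  exists x; split => // j; have [->|[i ->]] := split_ord j; [exact: hxn| exact: hx].
exists (x + f e * w); split; first by apply: ID => //; apply: IM.
move=> j; have [->|[i ->]] := split_ord j => hz.
- apply: hw.
  have h1' : Sat f J An (f e * w).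
    have -> : f e * w = (x + f e * w) + f (-1) * x
      by rewrite rmorphN rmorph1 mulN1r addrC addKr.
    exact: Sat_add (hA _) hz (Sat_scale _ (hA _) hxn).
  have -> : w = f e * w + f (1 - e) * w
    by rewrite -mulrDl -rmorphD addrC subrK rmorph1 mul1r.
  exact: Sat_add (hA _) h1' (Sat_base hIJ (hA _) Iw eN).
- apply: (hx i).
  have -> : x = (x + f e * w) + f (- e) * w by rewrite rmorphN mulNr addrK.
  have hAe : A (wd i) (- e).
    by have [_ _ AM] := hA (wd i); rewrite -mulN1r; apply: AM; exact: eA.
  exact: Sat_add (hA _) hz (Sat_base hIJ (hA _) Iw hAe).
Qed.

Theorem corollary3p2 (R : comNzRingType) (T : comUnitRingType)
    (f : {rmorphism R -> T}) (hT : total_ring_of_fractions f)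
    (I : T -> Prop) (hI : invertible_fractional_ideal f I)
    (n : nat) (M : 'I_n -> T -> Prop)
    (hM : forall k, Rsubmodule f (M k))
    (hU : forall x, I x <-> exists k, M k x) :
  exists k : 'I_n, forall x, I x <-> M k x.
Proof.
have [finj _ _] := hT.
case: hI => [[hIsub _] [J [_ hIJ]]].
have hprod : forall x y, I x -> J y -> exists s, x * y = f s.
  move=> x y Ix Jy; apply/hIJ; exists 1%N, (fun _ => x), (fun _ => y); split => //.
  by rewrite big_ord1.
have h1 : exists m (xs ys : 'I_m -> T), [/\ forall i, I (xs i), forall i, J (ys i) &
       1 = \sum_(i < m) xs i * ys i].
  by apply/hIJ; exists 1; rewrite rmorph1.
apply: NNPP => hno.
pose A := fun k r => forall x, I x -> M k (f r * x).
have hA : forall k, idl (A k).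
  move=> k; have [M0 MD MM] := hM k; split.
  - by move=> x _; rewrite rmorph0 mul0r.
  - move=> a b ha hb x Ix; rewrite rmorphD mulrDl; apply: MD; [exact: ha|exact: hb].
  - move=> r a ha x Ix; rewrite rmorphM -mulrA; apply: MM; exact: ha.
have nA1 : forall k, ~ A k 1.
  move=> k h1k; apply: hno; exists k => x; split.
  - by move=> Ix; have := h1k x Ix; rewrite rmorph1 mul1r.
  - by move=> Mx; apply/hU; exists k.
have [x [Ix hx]] := key finj hIsub hprod h1 hA nA1.
have [k Mk] := (hU x).1 Ix.
apply: (hx k) => y Jy; have [r e] := hprod x y Ix Jy; exists r; split => //.
move=> z Iz; have [s es] := hprod z y Iz Jy.
have -> : f r * z = f s * x by rewrite -e -es; ring.
have [_ _ MM] := hM k; exact: (MM s x Mk).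
Qed.
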